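(* Let $(F_i)_{i\ge 1}$ and $(F'_j)_{j\ge1}$ be nice sequences of graphs. Consider the graphs $F_i+F'_j$ with the partial order in which $F_i+F'_j$ precedes $F_k+F'_\ell$ if $(i,j)\ne(k,\ell)$, $i\le k$ and $j\le \ell$. Then any total ordering of the graphs $F_i+F'_j$ extending this partial order is a nice sequence.
   Context: For graphs $A,B$, $A+B$ denotes their join: the disjoint union of $A$ and $B$ together with all edges between $V(A)$ and $V(B)$. A (finite or infinite) sequence of graphs $F_1,F_2,\dots$ is nice if for every $i$ and every two non-adjacent vertices $u,v$ of $F_i$, the graph obtained from $F_i$ by joining both $u$ and $v$ to every vertex of $N(u)\cup N(v)$ contains some $F_j$ with $j<i$ as a subgraph. *)

(* Defs.v *)
From mathcomp Require Import all_boot.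
Set Implicit Arguments. Unset Strict Implicit. Unset Printing Implicit Defensive.

Record graph := Graph {
  vert : finType;
  adj : rel vert;
  adj_sym : symmetric adj;
  adj_irr : irreflexive adj }.

(* Join A + B: disjoint union plus all edges between V(A) and V(B). *)
Definition join_adj (A B : graph) : rel (vert A + vert B)%type :=
  fun x y => match x, y with
  | inl a, inl a' => adj a a'
  | inr b, inr b' => adj b b'
  | _, _ => true
  end.

Lemma join_adj_sym A B : symmetric (@join_adj A B).
Proof. by case=> [a|b] [a'|b'] //=; rewrite adj_sym. Qed.

Lemma join_adj_irr A B : irreflexive (@join_adj A B).
Proof. by case=> [a|b] /=; rewrite adj_irr. Qed.

Definition join (A B : graph) : graph :=
  @Graph (vert A + vert B)%type (@join_adj A B) (@join_adj_sym A B) (@join_adj_irr A B).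

Definition merge_adj (G : graph) (u v : vert G) : rel (vert G) :=
  fun x y =>
    [|| adj x y,
        ((x == u) || (x == v)) && (adj u y || adj v y)
      | ((y == u) || (y == v)) && (adj u x || adj v x)].

Definition contains_subgraph (T : finType) (e : rel T) (H : graph) : Prop :=
  exists f : vert H -> T, injective f /\ forall x y, adj x y -> e (f x) (f y).

(* Nice (infinite) sequence, indexed from 0 instead of 1. *)
Definition nice (F : nat -> graph) : Prop :=
  forall (i : nat) (u v : vert (F i)), u != v -> ~~ adj u v ->
    exists2 j, j < i & contains_subgraph (merge_adj u v) (F j).

Definition pair_prec (p q : nat * nat) : bool :=
  (p != q) && (p.1 <= q.1) && (p.2 <= q.2).

(* Main.v *)
Require Import Defs.
From mathcomp Require Import all_boot.

Lemma embL (A A' B : graph) (a a' : vert A) :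
  contains_subgraph (merge_adj a a') A' ->
  contains_subgraph (@merge_adj (join A B) (inl a) (inl a')) (join A' B).
Proof.
case=> f [finj fadj].
exists (fun x : vert (join A' B) => match x with inl x => inl (f x) | inr y => inr y end : vert (join A B)).
split.
  case=> [x|x] [y|y] //= [] // => E; by rewrite ?(finj _ _ E) ?E.
case=> [x|x] [y|y] //= H; rewrite /merge_adj /=.
- by have := fadj _ _ H.
- by rewrite H.
Qed.

Lemma embR (A B B' : graph) (b b' : vert B) :
  contains_subgraph (merge_adj b b') B' ->
  contains_subgraph (@merge_adj (join A B) (inr b) (inr b')) (join A B').
Proof.
case=> f [finj fadj].
exists (fun x : vert (join A B') => match x with inl x => inl x | inr y => inr (f y) end : vert (join A B)).
split.
  case=> [x|x] [y|y] //= [] // => E; by rewrite ?(finj _ _ E) ?E.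
case=> [x|x] [y|y] //= H; rewrite /merge_adj /=.
- by rewrite H.
- by have := fadj _ _ H.
Qed.

Lemma step (F F' : nat -> graph) i j (u v : vert (join (F i) (F' j))) :
  nice F -> nice F' -> u != v -> ~~ adj u v ->
  exists k l, pair_prec (k, l) (i, j) /\
     contains_subgraph (merge_adj u v) (join (F k) (F' l)).
Proof.
move=> nF nF'.
case: u => [a|b]; case: v => [a'|b'] //= neq nadj.
- have [k ki H] := nF i a a' neq nadj.
  exists k, j; split; last exact: embL.
  rewrite /pair_prec /= leqnn (ltnW ki) !andbT.
  by apply/eqP => -[]; move=> *; subst; move: ki; rewrite ltnn.
- have [k ki H] := nF' j b b' neq nadj.
  exists i, k; split; last exact: embR.
  rewrite /pair_prec /= leqnn (ltnW ki) !andbT.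
  by apply/eqP => -[]; move=> *; subst; move: ki; rewrite ltnn.
Qed.

Theorem mainTheorem8 (F F' : nat -> graph) (e : nat -> nat * nat) :
  nice F -> nice F' ->
  bijective e ->
  (forall n m, pair_prec (e n) (e m) -> n < m) ->
  nice (fun n => join (F (e n).1) (F' (e n).2)).
Proof.
move=> nF nF' [g eg ge] hord n u v neq nadj.
have [k [l [P C]]] := @step F F' _ _ u v nF nF' neq nadj.
exists (g (k, l)).
  apply: hord; rewrite ge.
  by move: P; case: (e n).
by rewrite ge.
Qed.
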